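(* If $S\subseteq\mathbb{N}^d$ is a quasi-irreducible GNS, then $\tau(S)\le t(S)\le 2\tau(S)$.
   Context: $\mathbb{N}=\{0,1,2,\dots\}$. A GNS is a submonoid $S\subseteq\mathbb{N}^d$ with finite complement $\mathcal{H}(S)=\mathbb{N}^d\setminus S$ (gaps). A relaxed monomial order is a total order $\prec$ on $\mathbb{N}^d$ with (i) $v\prec w\Rightarrow v\prec w+u$ for all $u\in\mathbb{N}^d$, (ii) $0\prec v$ for all $v\neq0$. A gap is Frobenius allowable if it equals $\max_\prec\mathcal{H}(S)$ for some relaxed monomial order; $FA(S)$ is their set and $\tau(S)=|FA(S)|$. A gap $P$ is pseudo-Frobenius if $P+s\in S$ for all nonzero $s\in S$; $PF(S)$ is their set and $t(S)=|PF(S)|$. $S$ is quasi-irreducible if for every $x\in\mathcal{H}(S)$, either $2x\in FA(S)$ or there is $F\in FA(S)$ with $F-x\in S$. *)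

(* Defs.v *)
From HB Require Import structures.
From mathcomp Require Import all_boot.
From mathcomp Require Import finmap.
From mathcomp Require Import boolp.

Set Implicit Arguments.
Unset Strict Implicit.
Unset Printing Implicit Defensive.

Local Open Scope fset_scope.

Definition vec (d : nat) := {ffun 'I_d -> nat}.

Definition vzero {d : nat} : vec d := [ffun _ => 0%N].
Definition vadd {d : nat} (u v : vec d) : vec d := [ffun i => (u i + v i)%N].

(* A generalized numerical semigroup (GNS) in N^d is given by its finite
   set of gaps H; S = N^d \ H.  The GNS condition: S is a submonoid. *)
Definition inS {d : nat} (H : {fset vec d}) (v : vec d) : Prop := v \notin H.

Definition is_GNS {d : nat} (H : {fset vec d}) : Prop :=
  inS H vzero /\ (forall u v, inS H u -> inS H v -> inS H (vadd u v)).

Definition relaxed_monomial_order {d : nat} (lt : vec d -> vec d -> Prop) : Prop :=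
  [/\ (forall v, ~ lt v v),
      (forall u v w, lt u v -> lt v w -> lt u w),
      (forall u v, u = v \/ lt u v \/ lt v u),
      (forall v w u, lt v w -> lt v (vadd w u)) &
      (forall v, v <> vzero -> lt vzero v)].

Definition is_max_wrt {d : nat} (lt : vec d -> vec d -> Prop) (H : {fset vec d})
  (P : vec d) : Prop :=
  P \in H /\ (forall h, h \in H -> h <> P -> lt h P).

Definition frob_allowable {d : nat} (H : {fset vec d}) (P : vec d) : Prop :=
  exists lt : vec d -> vec d -> Prop, relaxed_monomial_order lt /\ is_max_wrt lt H P.

Definition FA {d : nat} (H : {fset vec d}) : {fset vec d} :=
  [fset P in H | `[< frob_allowable H P >]].

Definition tau {d : nat} (H : {fset vec d}) : nat := #|` FA H|.

Definition pseudo_frobenius {d : nat} (H : {fset vec d}) (P : vec d) : Prop :=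
  P \in H /\ (forall s, inS H s -> s <> vzero -> inS H (vadd P s)).

Definition PF {d : nat} (H : {fset vec d}) : {fset vec d} :=
  [fset P in H | `[< pseudo_frobenius H P >]].

Definition t_type {d : nat} (H : {fset vec d}) : nat := #|` PF H|.

(* Quasi-irreducibility: for every gap x, 2x is Frobenius allowable or
   there is F in FA(S) with F - x in S (i.e. F = x + s with s in S). *)
Definition quasi_irreducible {d : nat} (H : {fset vec d}) : Prop :=
  forall x, x \in H ->
    frob_allowable H (vadd x x) \/
    exists F s, frob_allowable H F /\ inS H s /\ F = vadd x s.

(* Main.v *)
Require Import Defs.
From mathcomp Require Import all_boot finmap.
From mathcomp Require Import boolp.

Local Open Scope fset_scope.

Lemma vadd_eq_self d (F s : vec d) : vadd F s = F -> s = vzero.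
Proof.
move=> e; apply/ffunP=> i; have := congr1 (fun f : vec d => f i) e.
rewrite /vadd /vzero !ffunE => h; apply/eqP; rewrite -(eqn_add2l (F i)) addn0; apply/eqP; exact: h.
Qed.

Lemma double_inj d : injective (fun x : vec d => vadd x x).
Proof.
move=> x y e; apply/ffunP=> i; have := congr1 (fun f : vec d => f i) e.
rewrite /vadd !ffunE => h; rewrite -[x i]half_double -[y i]half_double -!addnn h //.
Qed.

Lemma FA_PF d (H : {fset vec d}) P : frob_allowable H P -> pseudo_frobenius H P.
Proof.
case=> lt [[irr tr tot comp pos] [PH mx]]; split=> // s Ss s0; apply/negP => Ps.
have [e|e] := eqVneq (vadd P s) P.
  by apply: s0; exact: vadd_eq_self e.
have l1 := mx _ Ps (elimN eqP e).
have := comp _ _ s l1; exact: irr.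
Qed.

Lemma inFA d (H : {fset vec d}) P : (P \in FA H) <-> frob_allowable H P.
Proof.
rewrite /FA !inE; split; first by case/andP=> _ /asboolP.
move=> h; apply/andP; split; last exact/asboolP.
by case: h => lt [_ []].
Qed.

Lemma inPF d (H : {fset vec d}) P : (P \in PF H) <-> pseudo_frobenius H P.
Proof.
rewrite /PF !inE; split; first by case/andP=> _ /asboolP.
move=> h; apply/andP; split; last exact/asboolP.
by case: h.
Qed.

Theorem corollary3p4 (d : nat) (H : {fset vec d}) :
  is_GNS H -> quasi_irreducible H ->
  (tau H <= t_type H <= 2 * tau H)%N.
Proof.
move=> _ qi; apply/andP; split.
  apply: fsubset_leq_card; apply/fsubsetP=> P /inFA h; apply/inPF; exact: FA_PF.
pose X := [fset P in PF H | vadd P P \in FA H].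
have sub : PF H `<=` FA H `|` X.
  apply/fsubsetP=> P PP; have [PH Pps] := (inPF _ _ _).1 PP.
  rewrite in_fsetU; case: (qi P PH) => [h|[F [s [fa [Ss eF]]]]].
    apply/orP; right; rewrite /X in_fsetE /=; apply/andP; split; [exact: PP| exact/inFA].
  apply/orP; left; apply/inFA.
  have [s0|s0] := eqVneq s vzero.
    suff -> : P = F by []; rewrite eF s0; apply/ffunP=> i; by rewrite /vadd /vzero !ffunE addn0.
  exfalso; case: fa => lt [[_ _ _ _ _] [FH _]].
  by move: (Pps s Ss (elimN eqP s0)); rewrite /inS -eF FH.
have cX : (#|` X| <= #|` FA H|)%N.
  have /eqP <- : #|` [fset vadd x x | x in X]| == #|` X|.
    by apply/card_in_imfsetP=> x y _ _; exact: double_inj.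
  apply: fsubset_leq_card; apply/fsubsetP=> y /imfsetP [x xX ->].
  by move: xX; rewrite /X inE => /andP[].
rewrite /t_type /tau; apply: leq_trans (fsubset_leq_card sub) _.
apply: leq_trans (leq_card_fsetU _ _) _.
by rewrite mul2n -addnn leq_add2l.
Qed.
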